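(* Let $X$ be a nonempty countable set, $\mathcal D$ a distribution on $X$, $m\ge1$, $S\sim\mathcal D^m$, and let $g$ be any random variable on the same probability space as $S$ taking values in a finite nonempty set $G$. For $g_0\in G$ with $\Pr[g=g_0]>0$ let $\mathcal D_{\mathrm{goal}}(g_0)=\mathbb E[\mathrm{Unif}(S)\mid g=g_0]$. Then $$\mathbb E_g\big[d_{\mathrm{TV}}(\mathcal D,\mathcal D_{\mathrm{goal}}(g))\big]\le\sqrt{\frac{\ln|G|}{2m}}.$$
   Context: For a tuple $S=(S_1,\dots,S_m)$, $\mathrm{Unif}(S)$ is the law of $S_i$ for $i$ uniform on $[m]$; $\mathbb E[\mathrm{Unif}(S)\mid g=g_0]$ is the corresponding mixture (law of a uniformly random coordinate of $S$ conditioned on $g=g_0$). $d_{\mathrm{TV}}$ is total variation distance. *)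

(* Defs.v *)
From HB Require Import structures.
From mathcomp Require Import all_boot all_order all_algebra.
From mathcomp Require Import all_classical all_reals all_analysis.
Set Implicit Arguments. Unset Strict Implicit. Unset Printing Implicit Defensive.
Import Order.TTheory GRing.Theory Num.Theory.
Local Open Scope classical_set_scope.
Local Open Scope ring_scope.

Section Defs.
Variable R : realType.

Definition is_pmf (X : countType) (D : X -> R) : Prop :=
  (forall x, 0 <= D x) /\ (\esum_(x in [set: X]) (D x)%:E = 1)%E.

Definition prod_pmf (X : countType) (m : nat) (D : X -> R)
  (s : {ffun 'I_m -> X}) : R := \prod_(i < m) D (s i).

(* Markov kernel from samples to G : the conditional law of g given S.
   The joint law of (S, g) is P(S = s, g = g0) = prod_pmf D s * q s g0. *)
Definition is_kernel (A : Type) (G : finType) (q : A -> G -> R) : Prop :=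
  (forall a g0, 0 <= q a g0) /\ (forall a, \sum_(g0 : G) q a g0 = 1).

Definition prob_g (X : countType) (G : finType) (m : nat) (D : X -> R)
  (q : {ffun 'I_m -> X} -> G -> R) (g0 : G) : R :=
  fine (\esum_(s in [set: {ffun 'I_m -> X}]) (prod_pmf D s * q s g0)%:E).

Definition unif_pmf (X : countType) (m : nat) (s : {ffun 'I_m -> X}) (x : X) : R :=
  (#|[set i : 'I_m | s i == x]|)%:R / m%:R.

Definition D_goal (X : countType) (G : finType) (m : nat) (D : X -> R)
  (q : {ffun 'I_m -> X} -> G -> R) (g0 : G) (x : X) : R :=
  fine (\esum_(s in [set: {ffun 'I_m -> X}])
          (prod_pmf D s * q s g0 * unif_pmf s x)%:E) / prob_g D q g0.

Definition dTV (X : countType) (P Q : X -> R) : R :=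
  fine (\esum_(x in [set: X]) (`|P x - Q x|)%:E) / 2.

Definition expected_dTV (X : countType) (G : finType) (m : nat) (D : X -> R)
  (q : {ffun 'I_m -> X} -> G -> R) : R :=
  \sum_(g0 : G | 0 < prob_g D q g0) prob_g D q g0 * dTV D (D_goal D q g0).

End Defs.

(* Main.v *)
Require Import Defs.
From HB Require Import structures.
From mathcomp Require Import all_boot all_order all_algebra.
From mathcomp Require Import all_classical all_reals all_analysis.
From mathcomp Require Import ring lra.
Set Implicit Arguments. Unset Strict Implicit. Unset Printing Implicit Defensive.
Import Order.TTheory GRing.Theory Num.Theory numFieldNormedType.Exports.
Local Open Scope classical_set_scope.
Local Open Scope ring_scope.

Section TK.
Variable R : realType.

Lemma esumZ (T : choiceType) (S : set T) (c : R) (a : T -> \bar R) :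
  0 <= c -> (forall x, S x -> (0 <= a x)%E) ->
  (\esum_(x in S) (c%:E * a x) = c%:E * \esum_(x in S) a x)%E.
Proof.
move=> c0 a0; rewrite /esum -ereal_supZl //; last first.
  by apply/set0P; exists (\sum_(x \in set0) a x)%E; exists set0 => //; exact: fsets_set0.
have hA (A : set T) : finite_set A -> A `<=` S ->
    (\sum_(x \in A) (c%:E * a x) = c%:E * \sum_(x \in A) a x)%E.
  move=> finA AS; rewrite !fsbig_finite //= big_seq [in RHS]big_seq.
  rewrite ge0_sume_distrr // => x; rewrite in_fset_set // inE => /AS; exact: a0.
congr ereal_sup; apply/seteqP; split.
- move=> _ [A [finA AS] <-].
  exists (\sum_(x \in A) a x)%E; first by exists A.
  by rewrite hA.
- move=> _ [_ [A [finA AS] <-] <-].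
  by exists A => //; rewrite hA.
Qed.


Definition ssum (T : choiceType) (f : T -> R) : R :=
  fine (\esum_(x in [set: T]) (f x)%:E).
Definition summ (T : choiceType) (f : T -> R) : Prop :=
  (forall x, 0 <= f x) /\ (\esum_(x in [set: T]) (f x)%:E < +oo)%E.

Lemma summE (T : choiceType) (f : T -> R) : summ f ->
  \esum_(x in [set: T]) (f x)%:E = (ssum f)%:E.
Proof.
move=> [f0 fo]; rewrite /ssum fineK // ge0_fin_numE //.
by apply: esum_ge0 => x _; rewrite lee_fin.
Qed.

Lemma ssum_ge0 (T : choiceType) (f : T -> R) : (forall x, 0 <= f x) -> 0 <= ssum f.
Proof. by move=> f0; apply: fine_ge0; apply: esum_ge0 => x _; rewrite lee_fin. Qed.

Lemma summ_le (T : choiceType) (f g : T -> R) :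
  (forall x, 0 <= f x <= g x) -> summ g -> summ f.
Proof.
move=> fg [g0 go]; split; first by move=> x; case/andP: (fg x).
apply: le_lt_trans go; apply: le_esum => x _; rewrite lee_fin.
by case/andP: (fg x).
Qed.

Lemma ssum_le (T : choiceType) (f g : T -> R) :
  (forall x, 0 <= f x <= g x) -> summ g -> ssum f <= ssum g.
Proof.
move=> fg sg; have sf := summ_le fg sg.
rewrite -lee_fin -!summE //; apply: le_esum => x _; rewrite lee_fin.
by case/andP: (fg x).
Qed.

Lemma summD (T : choiceType) (f g : T -> R) : summ f -> summ g ->
  summ (fun x => f x + g x) /\ ssum (fun x => f x + g x) = ssum f + ssum g.
Proof.
move=> sf sg; have [f0 _] := sf; have [g0 _] := sg.
have E : \esum_(x in [set: T]) ((f x + g x)%:E) = (ssum f + ssum g)%:E.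
  rewrite (eq_esum (b := fun x => (f x)%:E + (g x)%:E)%E) //.
  rewrite esumD ?summE // => x _; rewrite lee_fin //.
split; first by split; [move=> x; apply: addr_ge0|rewrite E ltry].
by rewrite /ssum E.
Qed.

Lemma summZ (T : choiceType) (c : R) (f : T -> R) : 0 <= c -> summ f ->
  summ (fun x => c * f x) /\ ssum (fun x => c * f x) = c * ssum f.
Proof.
move=> c0 sf; have [f0 _] := sf.
have E : \esum_(x in [set: T]) ((c * f x)%:E) = (c * ssum f)%:E.
  rewrite (eq_esum (b := fun x => c%:E * (f x)%:E)%E) //.
  rewrite esumZ ?summE // => x _; rewrite lee_fin //.
split; first by split; [move=> x; apply: mulr_ge0|rewrite E ltry].
by rewrite /ssum E.
Qed.

Lemma summ_sum (T : choiceType) (I : Type) (r : seq I) (F : I -> T -> R) :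
  (forall i, summ (F i)) ->
  summ (fun x => \sum_(i <- r) F i x) /\
  ssum (fun x => \sum_(i <- r) F i x) = \sum_(i <- r) ssum (F i).
Proof.
move=> sF; elim: r => [|i r [IH1 IH2]].
  have E : \esum_(x in [set: T]) ((\sum_(i <- [::]) F i x)%:E) = 0%E.
    by apply: esum1 => x _; rewrite big_nil.
  by split; [split; [move=> x; rewrite big_nil|rewrite E ltry]|rewrite /ssum E big_nil].
have [D1 D2] := summD (sF i) IH1.
split.
  by apply: (summ_le (g := fun x => F i x + \sum_(j <- r) F j x)) => // x; rewrite big_cons lexx andbT; case: D1 => + _; apply.
rewrite big_cons -IH2 -D2.
by congr ssum; apply/funext => x; rewrite big_cons.
Qed.

Lemma summ_point (T : choiceType) (a : T) (c : R) : 0 <= c ->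
  summ (fun x => if x == a then c else 0) /\ ssum (fun x => if x == a then c else 0) = c.
Proof.
move=> c0.
have E : \esum_(x in [set: T]) ((if x == a then c else 0)%:E) = c%:E.
  rewrite -(@esum_set1 R T a (fun=> c%:E)) ?lee_fin // [RHS]esum_mkcond.
  by apply: eq_esum => x _; rewrite in_set1; case: (x == a).
split; first by split; [move=> x; case: (x == a)|rewrite E ltry].
by rewrite /ssum E.
Qed.

Lemma esum_swap (T1 T2 : choiceType) (a : T1 -> T2 -> \bar R) :
  (forall x y, 0 <= a x y)%E ->
  (\esum_(x in [set: T1]) \esum_(y in [set: T2]) a x y =
   \esum_(y in [set: T2]) \esum_(x in [set: T1]) a x y)%E.
Proof.
move=> a0; rewrite esum_esum // esum_esum //.
rewrite (reindex_esum ([set: T1] `*`` (fun=> [set: T2])) _ (fun x => (x.2, x.1))) //.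
split => //=.
- by move=> [i1 i2] [j1 j2] /= _ _ [] -> ->.
- by move=> [i j] _ /=; exists (j, i).
Qed.


Lemma le_esum1 (T : choiceType) (b : T -> \bar R) (y : T) :
  (forall x, 0 <= b x)%E -> (b y <= \esum_(x in [set: T]) b x)%E.
Proof.
move=> b0; apply: esum_ge; exists [set y]; first by split => //; exact: finite_set1.
by rewrite fsbig_set1.
Qed.

Lemma ssum_swap (T1 T2 : choiceType) (f : T1 -> T2 -> R) :
  (forall x y, 0 <= f x y) -> (forall x, summ (f x)) -> summ (fun x => ssum (f x)) ->
  (forall y, summ (fun x => f x y)) /\ summ (fun y => ssum (fun x => f x y)) /\
  ssum (fun x => ssum (f x)) = ssum (fun y => ssum (fun x => f x y)).
Proof.
move=> f0 sf ss.
have E1 : (\esum_(x in [set: T1]) \esum_(y in [set: T2]) (f x y)%:E =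
    (ssum (fun x => ssum (f x)))%:E)%E.
  rewrite -summE //; apply: eq_esum => x _; exact: summE.
have E2 := @esum_swap T1 T2 (fun x y => (f x y)%:E) (fun x y => f0 x y).
rewrite E1 in E2.
have sy : forall y, summ (fun x => f x y).
  move=> y; split => [x|]; first exact: f0.
  apply: (@le_lt_trans _ _ (\esum_(y in [set: T2]) \esum_(x in [set: T1]) (f x y)%:E)%E).
    apply: (le_esum1 (b := fun y => \esum_(x in [set: T1]) (f x y)%:E)) => z.
    by apply: esum_ge0 => x _; rewrite lee_fin.
  by rewrite -E2 ltry.
have E3 : (\esum_(y in [set: T2]) \esum_(x in [set: T1]) (f x y)%:E =
    \esum_(y in [set: T2]) (ssum (fun x => f x y))%:E)%E.
  by apply: eq_esum => y _; exact: summE.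
rewrite E3 in E2.
split => //; split.
  split; first by move=> y; apply: ssum_ge0.
  by rewrite -E2 ltry.
by rewrite /ssum -E2 /=.
Qed.


Definition econs (X : Type) (m : nat) (p : X * {ffun 'I_m -> X}) : {ffun 'I_m.+1 -> X} :=
  [ffun i => if unlift ord0 i is Some j then p.2 j else p.1].

Lemma econs0 (X : Type) m (p : X * {ffun 'I_m -> X}) : econs p ord0 = p.1.
Proof. by rewrite /econs ffunE unlift_none. Qed.

Lemma econsS (X : Type) m (p : X * {ffun 'I_m -> X}) j : econs p (lift ord0 j) = p.2 j.
Proof. by rewrite /econs ffunE liftK. Qed.

Lemma esum_prod (X : choiceType) (f : X -> R) (m : nat) : summ f ->
  \esum_(s in [set: {ffun 'I_m -> X}]) (\prod_(i < m) f (s i))%:E = ((ssum f) ^+ m)%:E.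
Proof.
move=> sf; have [f0 _] := sf.
elim: m => [|m IH].
  pose s0 : {ffun 'I_0 -> X} := @ffun0 _ (fun=> X) (card_ord 0).
  have -> : [set: {ffun 'I_0 -> X}] = [set s0].
    apply/seteqP; split => s _ //=; apply/ffunP => -[] //.
  by rewrite esum_set1 big_ord0 ?expr0 // lee_fin.
rewrite (reindex_esum ([set: X] `*`` (fun=> [set: {ffun 'I_m -> X}])) _ (@econs X m)); last first.
  split => //=.
  - move=> [x1 s1] [x2 s2] _ _ /= E.
    have e1 := congr1 (fun t : {ffun 'I_m.+1 -> X} => t ord0) E.
    rewrite /= !econs0 /= in e1; rewrite e1; congr pair.
    apply/ffunP => j.
    have := congr1 (fun t : {ffun 'I_m.+1 -> X} => t (lift ord0 j)) E.
    by rewrite /= !econsS.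
  - move=> t _; exists (t ord0, [ffun j => t (lift ord0 j)]) => //.
    apply/ffunP => i; rewrite /econs ffunE.
    by case: unliftP => [j ->|->] /=; rewrite ?ffunE.
pose F (x : X) (s : {ffun 'I_m -> X}) := (\prod_(i < m.+1) f (econs (x, s) i))%:E.
transitivity (\esum_(k in [set: X] `*`` (fun=> [set: {ffun 'I_m -> X}])) F k.1 k.2)%E.
  by apply: eq_esum => -[x s] _.
rewrite -esum_esum; last by move=> i j _ _; rewrite lee_fin; apply: prodr_ge0 => k _.
rewrite /F.
transitivity (\esum_(x in [set: X]) ((f x)%:E * ((ssum f) ^+ m)%:E))%E.
  apply: eq_esum => x _.
  rewrite (eq_esum (b := fun s : {ffun 'I_m -> X} => (f x)%:E * (\prod_(i < m) f (s i))%:E)%E); last first.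
    by move=> s _; rewrite big_ord_recl econs0 /= -EFinM; congr (_%:E); congr (_ * _); apply: eq_bigr => i _; rewrite econsS.
  by rewrite esumZ // ?IH // => s _; rewrite lee_fin; apply: prodr_ge0.
rewrite (eq_esum (b := fun x => ((ssum f) ^+ m)%:E * (f x)%:E)%E); last by move=> x _; rewrite muleC.
rewrite esumZ ?summE //; last by move=> x _; rewrite lee_fin.
  by rewrite -EFinM exprSr.
by apply: exprn_ge0; apply: ssum_ge0.
Qed.

Lemma summ_prod (X : choiceType) (f : X -> R) (m : nat) : summ f ->
  summ (fun s : {ffun 'I_m -> X} => \prod_(i < m) f (s i)) /\
  ssum (fun s : {ffun 'I_m -> X} => \prod_(i < m) f (s i)) = ssum f ^+ m.
Proof.
move=> sf; have [f0 _] := sf; have E := esum_prod m sf.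
split; first by split; [move=> s; apply: prodr_ge0|rewrite E ltry].
by rewrite /ssum E.
Qed.

Lemma cont_of_der (f df : R -> R) (a b : R) : (forall x : R, is_derive x (1:R) f (df x)) ->
  {within `[a, b], continuous f}.
Proof.
move=> H; apply/continuous_subspaceT=> r.
apply/differentiable_continuous/derivable1_diffP.
by case: (H r).
Qed.

Lemma hoeff (p l : R) : 0 <= p <= 1 -> 0 <= l ->
  1 - p + p * expR l <= expR (l * p + l ^+ 2 / 8).
Proof.
move=> /andP[p0 p1] l0.
set a := 1 - p.
have a0 : 0 <= a by rewrite /a subr_ge0.
pose f1 x := a + p * expR x.
have f1pos x : 0 < f1 x.
  rewrite /f1 /a; have [->|pp] := eqVneq p 0; first by rewrite mul0r addr0 subr0 ltr01.
  by rewrite ltr_wpDl ?subr_ge0 // mulr_gt0 ?expR_gt0 // lt0r pp.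
have df1 (x : R) : is_derive x (1:R) f1 (p * expR x).
  have := is_deriveD (is_derive_cst a x (1:R)) (is_deriveZ p (is_derive_expR x)).
  by rewrite add0r => H; apply: is_derive_eq H _.
pose sig x := 1 - a * (f1 x)^-1.
have dsig (x : R) : is_derive x (1:R) sig (a * p * expR x / (f1 x) ^+ 2).
  have H1 := @is_deriveV _ f1 x _ 1 (lt0r_neq0 (f1pos x)) (df1 x).
  have := is_deriveB (is_derive_cst (1:R) x (1:R)) (is_deriveZ a H1).
  move=> H; apply: is_derive_eq H _.
  rewrite /GRing.scale /=; field.
  by rewrite gt_eqF // f1pos.
have claim1 (c : R) : 0 <= c -> sig c - p <= c / 4.
  move=> c0.
  have s0 : sig 0 = p.
    rewrite /sig /f1 expR0 mulr1 /a subrK invr1 mulr1; lra.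
  suff : sig c - sig 0 <= c / 4 by rewrite s0.
  have [d dI ->] := MVT_segment c0 (fun x _ => dsig x) (@cont_of_der _ _ 0 c dsig).
  rewrite subr0 mulrC ler_wpM2l //.
  have fd := f1pos d.
  rewrite ler_pdivrMr ?exprn_gt0 //.
  have : 0 <= (a - p * expR d) ^+ 2 by apply: sqr_ge0.
  rewrite /f1; nra.
pose h x := ln (f1 x) - p * x - 8^-1 * x ^+ 2.
have dh (x : R) : is_derive x (1:R) h ((f1 x)^-1 * (p * expR x) - p - x / 4).
  have H1 : is_derive x (1:R) ((@ln R) \o f1) ((f1 x)^-1 * (p * expR x)).
    apply: is_derive1_comp (df1 x).
    exact: is_derive1_ln.
  have H2 := is_deriveZ p (is_derive_id x (1:R)).
  have H3 := is_deriveZ (8^-1 : R) (is_deriveX 2 (is_derive_id x (1:R))).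
  have := is_deriveB (is_deriveB H1 H2) H3.
  move=> H; apply: is_derive_eq H _.
  rewrite /GRing.scale /=; field.
  exact/lt0r_neq0/f1pos.
have [d dI hE] := MVT_segment l0 (fun x _ => dh x) (@cont_of_der _ _ 0 l dh).
have h0 : h 0 = 0 by rewrite /h /f1 expR0 mulr1 /a subrK ln1 mulr0 expr0n /= mulr0 !subr0.
have d0 : 0 <= d by move: dI; rewrite in_itv /= => /andP[].
have := claim1 d d0.
have -> : sig d = (f1 d)^-1 * (p * expR d).
  rewrite /sig; have fd := f1pos d; rewrite /f1 in fd *; field.
  by rewrite gt_eqF.
move=> C.
have hl : h l <= 0.
  have : h l - h 0 <= 0 by rewrite hE subr0 mulr_le0_ge0 //; lra.
  by rewrite h0 subr0.
have : ln (f1 l) <= l * p + l ^+ 2 / 8 by move: hl; rewrite /h; lra.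
rewrite -ler_expR lnK ?posrE ?f1pos //.
Qed.

End TK.

Section Main.
Variable R : realType.
Variable X : countType.
Variable G : finType.
Variable m : nat.
Hypothesis m_pos : (1 <= m)%N.
Variable D : X -> R.
Hypothesis HD : is_pmf D.
Variable q : {ffun 'I_m -> X} -> G -> R.
Hypothesis Hq : is_kernel q.

Local Notation T := {ffun 'I_m -> X}.
Local Notation P := (@prod_pmf R X m D).
Local Notation unif := (@unif_pmf R X m).

Lemma D0 x : 0 <= D x. Proof. by case: HD. Qed.
Lemma sD : summ D.
Proof. by split; [exact: D0|case: HD => _ ->; rewrite ltry]. Qed.
Lemma ssD : ssum D = 1.
Proof. by rewrite /ssum; case: HD => _ ->. Qed.

Lemma sP : summ P /\ ssum P = 1.
Proof. by have [s1 s2] := summ_prod m sD; rewrite ssD expr1n in s2. Qed.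

Lemma q0 s g : 0 <= q s g. Proof. by case: Hq. Qed.
Lemma q1 s g : q s g <= 1.
Proof.
case: Hq => _ H; rewrite -(H s) (bigD1 g) //= lerDl.
by apply: sumr_ge0 => i _; exact: q0.
Qed.

Lemma P0 s : 0 <= P s.
Proof. by apply: prodr_ge0 => i _; exact: D0. Qed.

Definition cA (A : X -> bool) (s : T) : R := (\sum_(i < m) (A (s i))%:R) / m%:R.

Lemma m0 : (0 : R) < m%:R. Proof. by rewrite ltr0n. Qed.

Lemma minv : 0 <= m%:R^-1 :> R.
Proof. by rewrite invr_ge0 ler0n. Qed.

Lemma cA_ge0 A s : 0 <= cA A s.
Proof. by rewrite /cA divr_ge0 // ?sumr_ge0 // => i _; rewrite ler0n. Qed.

Lemma cA_le1 A s : cA A s <= 1.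
Proof.
rewrite /cA ler_pdivrMr ?m0 // mul1r.
apply: (@le_trans _ _ (\sum_(i < m) (1 : R))).
  by apply: ler_sum => i _; case: (A (s i)).
by rewrite sumr_const card_ord.
Qed.

Lemma unifE s x : unif s x = \sum_(i < m) (if x == s i then m%:R^-1 else 0).
Proof.
rewrite /unif_pmf -sum1_card natr_sum big_mkcond /= mulr_suml.
by apply: eq_bigr => i _; rewrite unfold_in /= asboolb [x == _]eq_sym; case: ifP => _; rewrite ?mul0r ?mul1r.
Qed.

Lemma unif_swap (w : T -> R) (A : X -> bool) : (forall s, 0 <= w s) -> summ w ->
  (forall x, summ (fun s => w s * unif s x * (A x)%:R)) /\
  summ (fun x => ssum (fun s => w s * unif s x * (A x)%:R)) /\
  ssum (fun x => ssum (fun s => w s * unif s x * (A x)%:R)) =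
  ssum (fun s => w s * cA A s).
Proof.
move=> w0 sw.
pose f s x := w s * unif s x * (A x)%:R.
have f0 s x : 0 <= f s x.
  by rewrite /f !mulr_ge0 // ?ler0n // unifE sumr_ge0 // => i _; case: ifP; rewrite ?invr_ge0 ?ler0n.
have fE s : f s = fun x => \sum_(i < m) (if x == s i then w s * m%:R^-1 * (A (s i))%:R else 0).
  apply/funext => x; rewrite /f unifE mulr_sumr mulr_suml; apply: eq_bigr => i _.
  by case: eqP => [->|]; rewrite ?mulr0 ?mul0r.
have sfs s : summ (f s) /\ ssum (f s) = w s * cA A s.
  rewrite fE; have [H1 H2] := summ_sum (index_enum 'I_m)
    (F := fun i x => if x == s i then w s * m%:R^-1 * (A (s i))%:R else 0)
    (fun i => (summ_point (s i) (mulr_ge0 (mulr_ge0 (w0 s) minv) (ler0n _ _))).1).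
  split; first exact: H1.
  move: H2 => /= ->; rewrite /cA mulrCA mulr_suml; apply: eq_bigr => i _.
  have [_ ->] := summ_point (s i) (mulr_ge0 (mulr_ge0 (w0 s) minv) (ler0n _ (A (s i)))).
  by rewrite mulrC.
have ss : summ (fun s => ssum (f s)).
  apply: (summ_le (g := w)) => // s; rewrite (sfs s).2 mulr_ge0 ?cA_ge0 //=.
  by rewrite -[X in _ <= X]mulr1 ler_wpM2l ?cA_le1.
have [H1 [H2 H3]] := ssum_swap f0 (fun s => (sfs s).1) ss.
split; first exact: H1.
split; first exact: H2.
rewrite -H3; congr ssum; apply/funext => s; exact: (sfs s).2.
Qed.


Lemma ssum_ext (U : choiceType) (f g : U -> R) : (forall x, f x = g x) -> ssum f = ssum g.
Proof. by move=> e; congr ssum; apply/funext. Qed.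

Lemma summ_ext (U : choiceType) (f g : U -> R) : (forall x, f x = g x) -> summ g -> summ f.
Proof. by move=> e; have -> : f = g by apply/funext. Qed.

Lemma unif_ge0 s x : 0 <= unif s x.
Proof. by rewrite unifE sumr_ge0 // => i _; case: ifP => _; rewrite ?minv. Qed.

Lemma unif_le1 s x : unif s x <= 1.
Proof.
rewrite unifE (@le_trans _ _ (\sum_(i < m) m%:R^-1)) //.
  by apply: ler_sum => i _; case: ifP => _; rewrite ?minv.
by rewrite sumr_const card_ord -[_ *+ _]mulr_natr mulVf // gt_eqF // m0.
Qed.

Definition pr g := prob_g D q g.
Definition w g s := P s * q s g.
Definition Dg g := D_goal D q g.

Lemma DgE g x : Dg g x = ssum (fun s => w g s * unif s x) / pr g.
Proof. by []. Qed.

Lemma w0 g s : 0 <= w g s. Proof. by rewrite /w mulr_ge0 ?P0 ?q0. Qed.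
Lemma sw g : summ (w g).
Proof.
apply: (summ_le (g := P)); last exact: sP.1.
by move=> s; rewrite w0 /w ler_piMr ?P0 ?q1.
Qed.
Lemma prE g : pr g = ssum (w g). Proof. by []. Qed.
Lemma pr0 g : 0 <= pr g. Proof. by rewrite prE ssum_ge0 // => s; exact: w0. Qed.

Lemma sV g x : summ (fun s => w g s * unif s x).
Proof.
apply: (summ_le (g := w g)); last exact: sw.
by move=> s; rewrite mulr_ge0 ?w0 ?unif_ge0 //= ler_piMr ?w0 ?unif_le1.
Qed.

Lemma DgA g (A : X -> bool) : 0 < pr g ->
  summ (fun x => Dg g x * (A x)%:R) /\
  ssum (fun x => Dg g x * (A x)%:R) = ssum (fun s => w g s * cA A s) / pr g.
Proof.
move=> prp.
have [H1 [H2 H3]] := unif_swap A (w0 g) (sw g).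
have E x : Dg g x * (A x)%:R = (pr g)^-1 * ssum (fun s => w g s * unif s x * (A x)%:R).
  have -> : ssum (fun s => w g s * unif s x * (A x)%:R) = (A x)%:R * ssum (fun s => w g s * unif s x).
    rewrite -(summZ (ler0n _ _) (sV g x)).2; apply: ssum_ext => s; by rewrite mulrC.
  rewrite DgE; ring.
have pi0 : 0 <= (pr g)^-1 by rewrite invr_ge0 pr0.
have [K1 K2] := summZ pi0 H2.
split; first exact: summ_ext E K1.
by rewrite (ssum_ext E) K2 H3 mulrC.
Qed.


Lemma ssumDE (U : choiceType) (f g : U -> R) : summ f -> summ g ->
  ssum (fun x => f x + g x) = ssum f + ssum g.
Proof. by move=> sf sg; have [] := summD sf sg. Qed.
Lemma summDE (U : choiceType) (f g : U -> R) : summ f -> summ g ->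
  summ (fun x => f x + g x).
Proof. by move=> sf sg; have [] := summD sf sg. Qed.
Lemma ssumZE (U : choiceType) c (f : U -> R) : 0 <= c -> summ f ->
  ssum (fun x => c * f x) = c * ssum f.
Proof. by move=> c0 sf; have [] := summZ c0 sf. Qed.
Lemma summZE (U : choiceType) c (f : U -> R) : 0 <= c -> summ f ->
  summ (fun x => c * f x).
Proof. by move=> c0 sf; have [] := summZ c0 sf. Qed.

Lemma cA1 s : cA (fun=> true) s = 1.
Proof. by rewrite /cA sumr_const card_ord -[_ *+ _]mulr_natr mul1r mulfV // gt_eqF // m0. Qed.

Definition Ag g x := D x < Dg g x.
Definition pA g := ssum (fun x => D x * (Ag g x)%:R).

Lemma sDA (A : X -> bool) : summ (fun x => D x * (A x)%:R).
Proof.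
apply: (summ_le (g := D)); last exact: sD.
by move=> x; rewrite mulr_ge0 ?D0 ?ler0n //= ler_piMr ?D0 //; case: (A x).
Qed.

Lemma pA_ge0 g : 0 <= pA g.
Proof. by apply: ssum_ge0 => x; rewrite mulr_ge0 ?D0 ?ler0n. Qed.

Lemma pA_le1 g : pA g <= 1.
Proof.
rewrite -ssD; apply: ssum_le; last exact: sD.
by move=> x; rewrite mulr_ge0 ?D0 ?ler0n //= ler_piMr ?D0 //; case: (Ag g x).
Qed.

Lemma dTV_eq g : 0 < pr g ->
  pr g * dTV D (Dg g) = ssum (fun s => w g s * cA (Ag g) s) - pr g * pA g.
Proof.
move=> prp.
set A := Ag g; set F := Dg g.
have [sFA eFA] := DgA (A) prp.
have [sFN eFN] := DgA (fun x => ~~ A x) prp.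
have [sF1 eF1] := DgA (fun=> true) prp.
have sF : summ F by apply: summ_ext sF1 => x; rewrite mulr1.
have eF : ssum F = 1.
  rewrite (ssum_ext (g := fun x => F x * (true)%:R)); last by move=> x; rewrite mulr1.
  rewrite eF1 (ssum_ext (g := w g)); last by move=> s; rewrite cA1 mulr1.
  by rewrite -prE mulfV // gt_eqF.
have F0 x : 0 <= F x.
  by case: sF => H _; exact: H.
have eFAN : ssum (fun x => F x * (A x)%:R) + ssum (fun x => F x * (~~ A x)%:R) = 1.
  rewrite -ssumDE // -[RHS]eF; apply: ssum_ext => x; by case: (A x) => /=; rewrite ?mulr1 ?mulr0 ?addr0 ?add0r.
have sN : summ (fun x => `|D x - F x|).
  apply: (summ_le (g := fun x => D x + F x)); last exact: summDE sD sF.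
  move=> y; rewrite normr_ge0 /=; apply: (le_trans (ler_normB _ _)).
  by rewrite !ger0_norm ?D0 ?F0.
have E1 x : `|D x - F x| + 2 * (D x * (A x)%:R + F x * (~~ A x)%:R) = D x + F x.
  rewrite /A /Ag -/F; have [h|h] := ltrP (D x) (F x) => /=.
    lra.
  rewrite ?ger0_norm ?subr_ge0 //; lra.
have s2 : summ (fun x => D x * (A x)%:R + F x * (~~ A x)%:R) := summDE (sDA A) sFN.
have s22 : summ (fun x => 2 * (D x * (A x)%:R + F x * (~~ A x)%:R)) := summZE (ler0n _ 2) s2.
have S1 := ssum_ext E1.
rewrite (ssumDE sN s22) (ssumZE (ler0n _ 2) s2) (ssumDE (sDA A) sFN) (ssumDE sD sF) ssD eF in S1.
have -> : dTV D F = ssum (fun x => `|D x - F x|) / 2 by [].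
rewrite eFA in eFAN.
have prn : pr g != 0 by rewrite gt_eqF.
set a := ssum (fun x => `|D x - F x|) in S1 *.
have pAE : pA g = ssum (fun x => D x * (A x)%:R) by [].
rewrite -pAE in S1.
set b := ssum (fun x => F x * (~~ A x)%:R) in S1 eFAN.
set c := ssum (fun s => w g s * cA A s) in eFAN *.
have -> : a / 2 = c / pr g - pA g by lra.
by rewrite mulrBr mulrCA mulfV // mulr1.
Qed.


Lemma exp_le : expected_dTV D q <=
  \sum_(g : G) (ssum (fun s => w g s * cA (Ag g) s) - pr g * pA g).
Proof.
rewrite /expected_dTV big_mkcond /=; apply: ler_sum => g _.
case: ifP => h; first by rewrite -dTV_eq.
have -> : pr g = 0.
  by apply/eqP; rewrite eq_le pr0 andbT leNgt h.
rewrite mul0r subr0; apply: ssum_ge0 => s; rewrite mulr_ge0 ?w0 ?cA_ge0 //.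
Qed.

Definition Y s := \sum_(g : G) q s g * (cA (Ag g) s - pA g).

Lemma Y1E s : Y s + 1 = \sum_(g : G) q s g * (cA (Ag g) s - pA g + 1).
Proof.
case: Hq => _ H; rewrite -{1}(H s) /Y -big_split /=; apply: eq_bigr => g _; ring.
Qed.

Lemma Y1_ge0 s : 0 <= Y s + 1.
Proof.
rewrite Y1E sumr_ge0 // => g _; rewrite mulr_ge0 ?q0 //.
by have := cA_ge0 (Ag g) s; have := pA_le1 g; lra.
Qed.

Lemma Y1_le2 s : Y s + 1 <= 2.
Proof.
rewrite Y1E; case: Hq => _ H.
apply: (@le_trans _ _ (\sum_(g : G) q s g * 2)).
  apply: ler_sum => g _; rewrite ler_wpM2l ?q0 //.
  by have := cA_le1 (Ag g) s; have := pA_ge0 g; lra.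
by rewrite -mulr_suml H mul1r.
Qed.

Lemma sPY : summ (fun s => P s * (Y s + 1)).
Proof.
apply: (summ_le (g := fun s => 2 * P s)); last by apply: summZE sP.1; rewrite ler0n.
move=> s; apply/andP; split; first by rewrite mulr_ge0 ?P0 ?Y1_ge0.
by rewrite [2 * _]mulrC ler_wpM2l ?P0 ?Y1_le2.
Qed.

Lemma chain : expected_dTV D q <= ssum (fun s => P s * (Y s + 1)) - 1.
Proof.
apply: (le_trans exp_le).
have swc g : summ (fun s => w g s * cA (Ag g) s).
  apply: (summ_le (g := w g)); last exact: sw.
  by move=> s; rewrite mulr_ge0 ?w0 ?cA_ge0 //= ler_piMr ?w0 ?cA_le1.
have swp g : summ (fun s => pA g * w g s) by apply: summZE (pA_ge0 g) (sw g).
have [S1 E1] := summ_sum (index_enum G) swc.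
have [S2 E2] := summ_sum (index_enum G) swp.
rewrite sumrB -E1.
have -> : \sum_(g : G) pr g * pA g = \sum_(g : G) ssum (fun s => pA g * w g s).
  by apply: eq_bigr => g _; rewrite (ssumZE (pA_ge0 g) (sw g)) mulrC.
rewrite -E2.
have pe s : P s * (Y s + 1) + \sum_(g : G) pA g * w g s =
    \sum_(g : G) w g s * cA (Ag g) s + P s.
  have PY : P s * Y s = \sum_(g : G) w g s * cA (Ag g) s - \sum_(g : G) pA g * w g s.
    rewrite /Y mulr_sumr -sumrB; apply: eq_bigr => g _; rewrite /w; ring.
  rewrite mulrDr mulr1 PY; ring.
have := ssum_ext pe.
rewrite (ssumDE sPY S2) (ssumDE S1 sP.1) sP.2.
move=> H; lra.
Qed.


Definition ee := ssum (fun s => P s * (Y s + 1)) - 1.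

Lemma Y_le1 s : Y s <= 1. Proof. by have := Y1_le2 s; lra. Qed.

Lemma sPexp mu : 0 <= mu -> summ (fun s => P s * expR (mu * Y s)).
Proof.
move=> mu0; apply: (summ_le (g := fun s => expR mu * P s)).
  move=> s; apply/andP; split; first by rewrite mulr_ge0 ?P0 ?expR_ge0.
  rewrite [expR mu * _]mulrC ler_wpM2l ?P0 // ler_expR -[X in _ <= X]mulr1 ler_wpM2l //.
  exact: Y_le1.
by apply: summZE sP.1; rewrite expR_ge0.
Qed.

Lemma B1 mu : 0 <= mu -> expR (mu * ee) <= ssum (fun s => P s * expR (mu * Y s)).
Proof.
move=> mu0.
set E := expR (mu * ee).
have e1 : 0 <= ee + 1 by rewrite /ee subrK; apply: ssum_ge0 => s; rewrite mulr_ge0 ?P0 ?Y1_ge0.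
set k := mu * (ee + 1).
have k0 : 0 <= k by rewrite mulr_ge0.
have E0 : 0 <= E by rewrite expR_ge0.
have pw s : E * P s + (E * mu) * (P s * (Y s + 1)) <= P s * expR (mu * Y s) + (E * k) * P s.
  have t : E * (1 + mu * (Y s - ee)) <= expR (mu * Y s).
    have -> : mu * Y s = mu * ee + mu * (Y s - ee) by ring.
    by rewrite expRD ler_wpM2l // expR_ge1Dx.
  rewrite -subr_ge0.
  have -> : P s * expR (mu * Y s) + E * k * P s - (E * P s + E * mu * (P s * (Y s + 1))) =
      P s * (expR (mu * Y s) - E * (1 + mu * (Y s - ee))) by rewrite /k; ring.
  by apply: mulr_ge0 (P0 s) _; rewrite subr_ge0.
have sl : summ (fun s => E * P s + (E * mu) * (P s * (Y s + 1))).
  apply: summDE; first exact: summZE E0 sP.1.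
  by apply: summZE sPY; rewrite mulr_ge0.
have sr : summ (fun s => P s * expR (mu * Y s) + (E * k) * P s).
  apply: summDE; first exact: sPexp.
  by apply: summZE sP.1; rewrite mulr_ge0.
have := ssum_le (f := fun s => E * P s + (E * mu) * (P s * (Y s + 1))) _ sr.
rewrite (ssumDE (summZE E0 sP.1) (summZE (mulr_ge0 E0 mu0) sPY)).
rewrite (ssumDE (sPexp mu0) (summZE (mulr_ge0 E0 k0) sP.1)).
rewrite (ssumZE E0 sP.1) (ssumZE (mulr_ge0 E0 mu0) sPY) (ssumZE (mulr_ge0 E0 k0) sP.1) sP.2.
have -> : ssum (fun s => P s * (Y s + 1)) = ee + 1 by rewrite /ee subrK.
rewrite /k => H.
have : E * 1 + E * mu * (ee + 1) <= ssum (fun s => P s * expR (mu * Y s)) + E * (mu * (ee + 1)) * 1.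
  apply: H => s; apply/andP; split; last exact: pw.
  by rewrite addr_ge0 ?mulr_ge0 ?P0 ?Y1_ge0.
have -> : E * mu * (ee + 1) = E * (mu * (ee + 1)) by ring.
lra.
Qed.

Lemma B2 s mu : 0 <= mu ->
  expR (mu * Y s) <= \sum_(g : G) expR (mu * (cA (Ag g) s - pA g)).
Proof.
move=> mu0.
set c := Y s; set E := expR (mu * c).
have E0 : 0 <= E by rewrite expR_ge0.
case: Hq => _ Hs.
apply: (@le_trans _ _ (\sum_(g : G) q s g * expR (mu * (cA (Ag g) s - pA g)))); last first.
  by apply: ler_sum => g _; rewrite ler_piMl ?expR_ge0 ?q1.
apply: (@le_trans _ _ (\sum_(g : G) q s g * (E * (1 + mu * ((cA (Ag g) s - pA g) - c))))); last first.
  apply: ler_sum => g _; rewrite ler_wpM2l ?q0 //.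
  have -> : mu * (cA (Ag g) s - pA g) = mu * c + mu * ((cA (Ag g) s - pA g) - c) by ring.
  by rewrite expRD ler_wpM2l // expR_ge1Dx.
have -> : \sum_(g : G) q s g * (E * (1 + mu * ((cA (Ag g) s - pA g) - c))) =
   \sum_(g : G) (E * q s g + (E * mu) * (q s g * (cA (Ag g) s - pA g)) - (E * mu * c) * q s g).
  by apply: eq_bigr => g _; ring.
rewrite sumrB big_split /= -!mulr_sumr Hs -/(Y s) -/c.
lra.
Qed.


Lemma B4 g lam : 0 <= lam ->
  summ (fun s => P s * expR (lam * m%:R * (cA (Ag g) s - pA g))) /\
  ssum (fun s => P s * expR (lam * m%:R * (cA (Ag g) s - pA g))) <=
    expR (m%:R * (lam ^+ 2 / 8)).
Proof.
move=> l0; set A := Ag g; set p := pA g.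
pose h x := D x * expR (lam * (A x)%:R).
have el : 0 <= expR lam - 1 by have := expR_ge1Dx lam; lra.
have hE x : h x = D x + (expR lam - 1) * (D x * (A x)%:R).
  by rewrite /h; case: (A x); rewrite ?mulr1 ?mulr0 ?expR0; ring.
have sh : summ h := summ_ext hE (summDE sD (summZE el (sDA A))).
have shE : ssum h = 1 - p + p * expR lam.
  by rewrite (ssum_ext hE) (ssumDE sD (summZE el (sDA A))) ssD (ssumZE el (sDA A)) -/(pA g) -/p; ring.
have [sp ep] := summ_prod m sh.
have mn : m%:R != 0 :> R by rewrite gt_eqF // m0.
have pw s : P s * expR (lam * m%:R * (cA A s - p)) =
    expR (- (lam * m%:R * p)) * \prod_(i < m) h (s i).
  have e1 : lam * m%:R * (cA A s - p) = - (lam * m%:R * p) + \sum_(i < m) lam * (A (s i))%:R.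
    by rewrite -mulr_sumr /cA; field.
  by rewrite e1 expRD expR_sum /h big_split /= /prod_pmf; ring.
split; first exact: summ_ext pw (summZE (expR_ge0 _) sp).
rewrite (ssum_ext pw) (ssumZE (expR_ge0 _) sp) ep shE.
have p01 : 0 <= p <= 1 by rewrite pA_ge0 pA_le1.
have H := hoeff p01 l0.
have H2 : (1 - p + p * expR lam) ^+ m <= expR (m%:R * (lam * p + lam ^+ 2 / 8)).
  rewrite expRM_natl; apply: lerXn2r => //; rewrite nnegrE ?expR_ge0 //.
  by have := expR_ge0 lam; case/andP: p01 => ? ?; nra.
apply: (le_trans (ler_wpM2l (expR_ge0 _) H2)).
rewrite -expRD; have -> : - (lam * m%:R * p) + m%:R * (lam * p + lam ^+ 2 / 8) = m%:R * (lam ^+ 2 / 8) by ring.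
by [].
Qed.


Lemma B5 lam : 0 < lam -> (0 < #|G|)%N ->
  ee <= ln (#|G|%:R : R) / (lam * m%:R) + lam / 8.
Proof.
move=> lp Gp.
set mu := lam * m%:R.
have mup : 0 < mu by rewrite mulr_gt0 // m0.
have mu0 := ltW mup.
set t := m%:R * (lam ^+ 2 / 8).
have h1 := B1 mu0.
pose F g s := P s * expR (mu * (cA (Ag g) s - pA g)).
have sF g : summ (F g) := (B4 g (ltW lp)).1.
have [sS eS] := summ_sum (index_enum G) sF.
have h2 : ssum (fun s => P s * expR (mu * Y s)) <= ssum (fun s => \sum_(g <- index_enum G) F g s).
  apply: ssum_le => // s; apply/andP; split; first by rewrite mulr_ge0 ?P0 ?expR_ge0.
  rewrite /F -mulr_sumr ler_wpM2l ?P0 //; exact: B2.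
have h3 : \sum_(g <- index_enum G) ssum (F g) <= #|G|%:R * expR t.
  apply: (@le_trans _ _ (\sum_(g : G) expR t)).
    by apply: ler_sum => g _; exact: (B4 g (ltW lp)).2.
  by rewrite sumr_const mulr_natl.
have Np : 0 < (#|G|%:R : R) by rewrite ltr0n.
have h4 : expR (mu * ee) <= expR (ln (#|G|%:R : R) + t).
  rewrite expRD lnK ?posrE //.
  by apply: (le_trans h1); apply: (le_trans h2); rewrite eS.
rewrite ler_expR in h4.
rewrite -(ler_pM2l mup).
have -> : mu * (ln (#|G|%:R : R) / (lam * m%:R) + lam / 8) = ln (#|G|%:R : R) + t.
  rewrite /mu /t; field.
  by rewrite gt_eqF ?m0 ?andbT // gt_eqF.
exact: h4.
Qed.

Lemma B6 (L e : R) : 0 <= L -> (forall lam, 0 < lam -> e <= L / (lam * m%:R) + lam / 8) ->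
  e <= Num.sqrt (L / (2 * m%:R)).
Proof.
move=> L0 H.
set s := Num.sqrt (L / (2 * m%:R)).
have s0 : 0 <= s by apply: sqrtr_ge0.
have ss : s ^+ 2 = L / (2 * m%:R).
  by rewrite sqr_sqrtr // divr_ge0 // mulr_ge0 // ler0n.
have [sp|s00] := ltrP 0 s.
  have := H (4 * s) (mulr_gt0 (ltr0n _ 4) sp).
  have -> : L / (4 * s * m%:R) + 4 * s / 8 = s.
    have mn : m%:R != 0 :> R by rewrite gt_eqF // m0.
    have -> : L = s ^+ 2 * (2 * m%:R) by rewrite ss mulfVK // mulf_neq0 // pnatr_eq0.
    field. by rewrite mn gt_eqF.
  by [].
have sz : s = 0 by apply/eqP; rewrite eq_le s00 s0.
rewrite sz; rewrite leNgt; apply/negP => ep.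
have h2m : 2 * m%:R != 0 :> R by rewrite mulf_neq0 // gt_eqF // m0.
have : L = 0.
  have h0 : L / (2 * m%:R) = 0 by rewrite -ss sz expr0n.
  by rewrite -(divfK h2m L) h0 mul0r.
move=> L00; have := H (4 * e) (mulr_gt0 (ltr0n _ 4) ep).
rewrite L00 mul0r add0r; lra.
Qed.


Lemma final (Gp : (0 < #|G|)%N) :
  expected_dTV D q <= Num.sqrt (ln (#|G|%:R : R) / (2 * m%:R)).
Proof.
apply: (le_trans chain); rewrite -/ee.
apply: B6; first by apply: ln_ge0; rewrite ler1n.
by move=> lam lp; exact: B5.
Qed.

End Main.

Theorem mainTheorem7 (R : realType) (X : countType) (x0 : X) (G : finType)
  (G_nonempty : (0 < #|G|)%N) (m : nat) (m_pos : (1 <= m)%N)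
  (D : X -> R) (HD : is_pmf D)
  (q : {ffun 'I_m -> X} -> G -> R) (Hq : is_kernel q) :
  expected_dTV D q <= Num.sqrt (ln (#|G|%:R : R) / (2 * m%:R)).
Proof. exact: final. Qed.
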